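(* Let $(G,X,\alpha)$ and $(H,X,\gamma)$ be $G$-spaces (with the same phase space $X$), and let $(\varphi,\mathrm{id}):(G,X,\alpha)\to(H,X,\gamma)$ be an equivariant pair of maps, i.e. $\varphi:G\to H$ is a continuous homomorphism with $\alpha(g,x)=\gamma(\varphi(g),x)$ for all $g\in G$, $x\in X$. Assume $\varphi$ is an epimorphism (surjective). Then: (a) $\ker\varphi\subset \ker_\alpha$; (b) $\varphi(\ker_\alpha)=\ker_\gamma$, and if $\alpha$ is effective then $\gamma$ is effective; (c) $Gx=Hx$ for every $x\in X$; in particular, if $\alpha$ is transitive then $\gamma$ is transitive; (d) if $\alpha$ is open (resp. $d$-open) then $\gamma$ is open (resp. $d$-open), and the components of the actions $\alpha$ and $\gamma$ coincide; (e) if $\mathcal U$ is an equiuniformity on $X$ for $(H,X,\gamma)$, then $\mathcal U$ is an equiuniformity on $X$ for $(G,X,\alpha)$; hence if $(H,X,\gamma)$ is $G$-Tychonoff then $(G,X,\alpha)$ is $G$-Tychonoff.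
   Context: All spaces are Tychonoff and all maps continuous. A $G$-space $(G,X,\alpha)$ is a topological group $G$ with a continuous action $\alpha:G\times X\to X$ (written $gx=\alpha(g,x)$). The kernel of the action is $\ker_\alpha=\{g\in G: gx=x \text{ for all } x\in X\}$; the action is effective if $\ker_\alpha=\{e\}$ and transitive if $Gx=X$ for some (any) $x$. $N_G(e)$ denotes the family of open neighborhoods of the unit. The action is open if $x\in\operatorname{Int}(Ox)$ for all $x\in X$, $O\in N_G(e)$, and $d$-open if $x\in\operatorname{Int}(\operatorname{cl}(Ox))$ for all $x\in X$, $O\in N_G(e)$. For a $d$-open action, $X$ is a disjoint union of clopen sets $\operatorname{cl}(Gx)$, $x\in X$, called the components of the action. Uniformities are given by families of open covers. A uniformity $\mathcal U$ on $X$ is an equiuniformity for $(G,X,\alpha)$ if it is saturated ($gu=\{gU:U\in u\}\in\mathcal U$ for all $u\in\mathcal U$, $g\in G$) and bounded (for every $u\in\mathcal U$ there are $O\in N_G(e)$ and $v\in\mathcal U$ such that the cover $\{OV:V\in v\}$ refines $u$). $(G,X,\alpha)$ is $G$-Tychonoff if there is a compactification $bX$ of $X$ and a continuous action of $G$ on $bX$ extending $\alpha$ (equivalently, via an equivariant embedding $(\mathrm{id},f)$). *)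

(* Defs.v *)
From HB Require Import structures.
From mathcomp Require Import all_boot all_order all_algebra.
From mathcomp Require Import all_classical all_reals all_analysis.

Set Implicit Arguments.
Unset Strict Implicit.
Unset Printing Implicit Defensive.

Local Open Scope classical_set_scope.

Definition tychonoff_space (T : topologicalType) : Prop :=
  completely_regular_space T /\ accessible_space T.

Record topGroup := TopGroup {
  tg_car :> topologicalType;
  tg_mul : tg_car -> tg_car -> tg_car;
  tg_inv : tg_car -> tg_car;
  tg_one : tg_car;
  tg_mulA : forall a b c, tg_mul a (tg_mul b c) = tg_mul (tg_mul a b) c;
  tg_mul1g : forall a, tg_mul tg_one a = a;
  tg_mulg1 : forall a, tg_mul a tg_one = a;
  tg_mulVg : forall a, tg_mul (tg_inv a) a = tg_one;
  tg_mulgV : forall a, tg_mul a (tg_inv a) = tg_one;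
  tg_mul_cont : continuous (fun p : tg_car * tg_car => tg_mul p.1 p.2);
  tg_inv_cont : continuous tg_inv }.

Arguments tg_mul {t}.
Arguments tg_inv {t}.
Arguments tg_one {t}.

Section Defs.
Context (G : topGroup) (X : topologicalType).

Definition nbhs_unit : set (set G) := [set O | open O /\ O tg_one].

Definition is_action (alpha : G -> X -> X) : Prop :=
  [/\ (forall x, alpha tg_one x = x),
      (forall g h x, alpha (tg_mul g h) x = alpha g (alpha h x))
    & continuous (fun p : G * X => alpha p.1 p.2)].

Definition act_ker (alpha : G -> X -> X) : set G :=
  [set g | forall x, alpha g x = x].

Definition effective (alpha : G -> X -> X) : Prop :=
  act_ker alpha = [set tg_one].

Definition act_set (alpha : G -> X -> X) (O : set G) (A : set X) : set X :=
  [set alpha g y | g in O & y in A].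

Definition act_orbit (alpha : G -> X -> X) (x : X) : set X :=
  [set alpha g x | g in [set: G]].

Definition transitive_action (alpha : G -> X -> X) : Prop :=
  forall x, act_orbit alpha x = [set: X].

Definition open_action (alpha : G -> X -> X) : Prop :=
  forall x O, nbhs_unit O -> (act_set alpha O [set x])° x.

Definition d_open_action (alpha : G -> X -> X) : Prop :=
  forall x O, nbhs_unit O -> (closure (act_set alpha O [set x]))° x.

Definition act_components (alpha : G -> X -> X) : set (set X) :=
  [set closure (act_orbit alpha x) | x in [set: X]].

End Defs.

Section Unif.
Context (X : topologicalType).

Definition is_cover (u : set (set X)) : Prop :=
  forall x, exists2 U, u U & U x.

Definition open_cover (u : set (set X)) : Prop :=
  is_cover u /\ (forall U, u U -> open U).

Definition refines (u v : set (set X)) : Prop :=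
  forall U, u U -> exists2 V, v V & U `<=` V.

Definition cover_star (A : set X) (u : set (set X)) : set X :=
  \bigcup_(U in [set U | u U /\ U `&` A !=set0]) U.

Definition star_refines (v u : set (set X)) : Prop :=
  forall V, v V -> exists2 U, u U & cover_star V v `<=` U.

(* a uniformity on X (compatible with the topology of X), given as a
   family of open covers *)
Definition is_uniformity (UU : set (set (set X))) : Prop :=
  [/\ (forall u, UU u -> open_cover u) /\ UU !=set0,
      (forall u v, UU u -> open_cover v -> refines u v -> UU v),
      (forall u v, UU u -> UU v -> exists2 w, UU w & refines w u /\ refines w v),
      (forall u, UU u -> exists2 v, UU v & star_refines v u)
    & (forall x O, open O -> O x -> exists2 u, UU u & cover_star [set x] u `<=` O)].

End Unif.

Section Equi.
Context (G : topGroup) (X : topologicalType).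

Definition saturated (alpha : G -> X -> X) (UU : set (set (set X))) : Prop :=
  forall u g, UU u -> UU [set alpha g @` U | U in u].

Definition bounded (alpha : G -> X -> X) (UU : set (set (set X))) : Prop :=
  forall u, UU u -> exists O, exists v,
    [/\ nbhs_unit O, UU v & refines [set act_set alpha O V | V in v] u].

Definition equiuniformity (alpha : G -> X -> X) (UU : set (set (set X))) :=
  [/\ is_uniformity UU, saturated alpha UU & bounded alpha UU].

Definition top_embedding (Y : topologicalType) (f : X -> Y) : Prop :=
  [/\ injective f, continuous f &
      (forall U, open U -> exists2 V, open V & f @` U = range f `&` V)].

Definition G_tychonoff (alpha : G -> X -> X) : Prop :=
  exists (Y : topologicalType) (f : X -> Y) (beta : G -> Y -> Y),
    [/\ compact [set: Y] /\ hausdorff_space Y, top_embedding f,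
        dense (range f), is_action beta
      & (forall g x, beta g (f x) = f (alpha g x))].

End Equi.

Definition group_hom (G H : topGroup) (phi : G -> H) : Prop :=
  forall a b, phi (tg_mul a b) = tg_mul (phi a) (phi b).

(* Main.v *)
Require Import Defs.
From HB Require Import structures.
From mathcomp Require Import all_boot all_order all_algebra.
From mathcomp Require Import all_classical all_reals all_analysis.

Local Open Scope classical_set_scope.

Lemma hom_one (G H : topGroup) (phi : G -> H) : group_hom phi -> phi tg_one = tg_one.
Proof.
move=> hom; have e := hom tg_one tg_one; rewrite tg_mul1g in e.
have := congr1 (tg_mul (tg_inv (phi tg_one))) e.
by rewrite tg_mulA tg_mulVg tg_mul1g => <-.
Qed.

Lemma pair_cont (G H Y : topologicalType) (phi : G -> H) :
  continuous phi -> continuous (fun p : G * Y => (phi p.1, p.2)).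
Proof.
move=> cphi [a b]; apply: cvg_pair => /=.
  apply: (cvg_comp fst phi (@cvg_fst _ _ (nbhs a) (nbhs b) _) (cphi a)).
exact: (@cvg_snd _ _ (nbhs a) (nbhs b) _).
Qed.

Theorem proposition2p11 (G H : topGroup) (X : topologicalType)
  (alpha : G -> X -> X) (gamma : H -> X -> X) (phi : G -> H) :
  tychonoff_space X -> tychonoff_space G -> tychonoff_space H ->
  is_action alpha -> is_action gamma ->
  continuous phi -> group_hom phi ->
  (forall g x, alpha g x = gamma (phi g) x) ->
  (forall h : H, exists g : G, phi g = h) ->
  (* (a) *)
  [set g | phi g = tg_one] `<=` act_ker alpha /\
  (* (b) *)
  (phi @` act_ker alpha = act_ker gamma /\ (effective alpha -> effective gamma)) /\
  (* (c) *)
  ((forall x, act_orbit alpha x = act_orbit gamma x) /\ (transitive_action alpha -> transitive_action gamma)) /\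
  (* (d) *)
  ((open_action alpha -> open_action gamma) /\
   (d_open_action alpha -> d_open_action gamma) /\
   (d_open_action alpha -> act_components alpha = act_components gamma)) /\
  (* (e) *)
  ((forall UU, equiuniformity gamma UU -> equiuniformity alpha UU) /\
   (G_tychonoff gamma -> G_tychonoff alpha)).
Proof.
move=> _ _ _ [a1 aM ac] [c1 cM cc] cphi hom heq surj.
have p1 := @hom_one _ _ _ hom.
have kerE : phi @` act_ker alpha = act_ker gamma.
  apply/seteqP; split.
    by move=> _ [g kg <-] x /=; rewrite -heq kg.
  move=> h kh; have [g pg] := surj h; exists g => //.
  by move=> x; rewrite heq pg kh.
have orbE : forall x, act_orbit alpha x = act_orbit gamma x.
  move=> x; apply/seteqP; split.
    by move=> _ [g _ <-]; exists (phi g) => //; rewrite heq.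
  move=> _ [h _ <-]; have [g pg] := surj h; exists g => //; by rewrite heq pg.
have nbP : forall O, nbhs_unit O -> nbhs_unit (phi @^-1` O).
  move=> O [oO O1]; split; last by rewrite /= p1.
  by apply: open_comp => // y _; exact: cphi.
have actS : forall O A, act_set alpha (phi @^-1` O) A `<=` act_set gamma O A.
  by move=> O A _ [g Og [y Ay <-]]; exists (phi g) => //; exists y => //; rewrite heq.
split; first by move=> g /= pg x; rewrite heq pg c1.
split.
  split => // eff; rewrite /effective -kerE eff.
  apply/seteqP; split; first by move=> _ [g -> <-].
  by move=> _ ->; exists tg_one.
split.
  split => // tr x; by rewrite -orbE.
split.
  split.
    move=> op x O nO; exact: (interiorS (actS O [set x]) (op x _ (nbP O nO))).
  split.
    move=> op x O nO.
    exact: (interiorS (closureS (actS O [set x])) (op x _ (nbP O nO))).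
  move=> _; rewrite /act_components.
  by apply/seteqP; split => _ [x _ <-]; exists x => //; rewrite orbE.
split.
  move=> UU [uni sat bnd]; split => //.
    move=> u g Uu.
    have -> : [set alpha g @` U | U in u] = [set gamma (phi g) @` U | U in u].
      have -> : alpha g = gamma (phi g) by apply: funext => x; rewrite heq.
      by [].
    exact: sat.
  move=> u Uu; have [ O0 [v [nO Uv ref]]] := bnd u Uu.
  exists (phi @^-1` O0), v; split => //; first exact: nbP.
  move=> _ [V vV <-]; have [W uW sW] := ref (act_set gamma O0 V) (ex_intro2 _ _ V vV erefl).
  exists W => //; apply: subset_trans sW; exact: actS.
move=> [Y [f [beta [cpt emb dns [b1 bM bc] beq]]]].
exists Y, f, (fun g y => beta (phi g) y).
split; [exact: cpt | exact: emb | exact: dns | | ].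
  split.
  - by move=> y; rewrite p1 b1.
  - by move=> g h y; rewrite hom bM.
  - move=> p.
    exact: (@continuous_comp _ _ _ (fun p : G * Y => (phi p.1, p.2))
      (fun q : H * Y => beta q.1 q.2) p (@pair_cont G H Y phi cphi p) (bc _)).
by move=> g x; rewrite beq heq.
Qed.
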